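(* For all positive integers $m,n,w,d$ with $n\ge 2$, $w\le m$ and $d\ge w+1$, we have $A(m,n,w,d)\le A(m,n-1,w,d-w)$.
   Context: $J(m,w)$ denotes the set of binary vectors of length $m$ and Hamming weight $w$. Elements of $J(m,w)^n$ are identified with $m\times n$ binary matrices all of whose columns have weight $w$, with distance the binary Hamming distance (number of differing entries). $A(m,n,w,d)$ denotes the maximum cardinality of a nonempty subset of $J(m,w)^n$ in which any two distinct elements are at Hamming distance at least $2d$. *)

(* Defs.v *)
From mathcomp Require Import all_boot.
Set Implicit Arguments. Unset Strict Implicit. Unset Printing Implicit Defensive.

(* An element of J(m,w)^n is an m x n binary matrix; we represent it as a
   function from the n column indices to columns, each column a function
   'I_m -> bool. *)
Notation col m := {ffun 'I_m -> bool}.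
Notation word m n := {ffun 'I_n -> col m}.

Definition weight (m : nat) (c : col m) : nat := #|[set i | c i]|.

Definition in_J (m n w : nat) (x : word m n) : bool :=
  [forall j, weight (x j) == w].

Definition hdist (m n : nat) (x y : word m n) : nat :=
  \sum_(j < n) #|[set i | x j i != y j i]|.

Definition is_code (m n w d : nat) (C : {set word m n}) : bool :=
  [&& C != set0,
      [forall x in C, in_J w x] &
      [forall x in C, forall y in C, (x != y) ==> (2 * d <= hdist x y)]].

(* A(m,n,w,d): maximum cardinality of such a code (0 if none exists). *)
Definition A (m n w d : nat) : nat :=
  \max_(C : {set word m n} | is_code w d C) #|C|.

(* Main.v *)
Require Import Defs.
From mathcomp Require Import all_boot.
From mathcomp Require Import zify.
Set Implicit Arguments. Unset Strict Implicit.

Definition proj (m n : nat) (x : word m n.+1) : word m n :=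
  [ffun j => x (widen_ord (leqnSn n) j)].

Lemma col_diff_le (m : nat) (a b : col m) :
  #|[set i | a i != b i]| <= weight a + weight b.
Proof.
rewrite /weight.
apply: leq_trans (leq_subr #|[set i | a i] :&: [set i | b i]| _).
rewrite -cardsU.
apply: subset_leq_card; apply/subsetP => i; rewrite !inE.
by case: (a i); case: (b i).
Qed.

Lemma hdist_proj (m n w : nat) (x y : word m n.+1) :
  in_J w x -> in_J w y ->
  hdist x y <= hdist (proj x) (proj y) + 2 * w.
Proof.
move=> /forallP Hx /forallP Hy.
rewrite /hdist big_ord_recr /=.
apply: leq_add.
  rewrite leq_eqVlt; apply/orP; left; apply/eqP; apply: eq_bigr => j _.
  by rewrite !ffunE.
apply: leq_trans (col_diff_le _ _) _.
by rewrite (eqP (Hx _)) (eqP (Hy _)); lia.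
Qed.

Lemma hdist_xx (m n : nat) (x : word m n) : hdist x x = 0.
Proof.
rewrite /hdist big1 // => j _; apply/eqP; rewrite cards_eq0; apply/eqP.
by apply/setP => i; rewrite !inE eqxx.
Qed.

Theorem proposition2 (m n w d : nat) :
  0 < m -> 0 < n -> 0 < w -> 0 < d ->
  2 <= n -> w <= m -> w + 1 <= d ->
  A m n w d <= A m n.-1 w (d - w).
Proof.
move=> _ _ _ _ Hn _ Hwd.
case: n Hn => [//|n] Hn /=.
apply/bigmax_leqP => C /and3P [CN /forall_inP CJ /forall_inP CD].
have inj : {in C &, injective (@proj m n)}.
  move=> x y xC yC Exy; apply/eqP; apply/negPn/negP => nxy.
  have := forall_inP (CD x xC) y yC; rewrite nxy /= => H.
  have := hdist_proj (CJ x xC) (CJ y yC).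
  rewrite Exy hdist_xx; lia.
rewrite -(card_in_imset inj).
apply: leq_bigmax_cond.
apply/and3P; split.
- by rewrite imset_eq0.
- apply/forall_inP => _ /imsetP [x xC ->].
  apply/forallP => j; rewrite ffunE.
  exact: (forallP (CJ x xC)).
- apply/forall_inP => _ /imsetP [x xC ->].
  apply/forall_inP => _ /imsetP [y yC ->].
  apply/implyP => Hne.
  have nxy : x != y by apply: contraNneq Hne => ->.
  have := implyP (forall_inP (CD x xC) y yC) nxy.
  have := hdist_proj (CJ x xC) (CJ y yC).
  lia.
Qed.
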